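(* Let $m,n\ge1$ be integers. If $(x,y,z)\in\mathbb{C}^3$ satisfies $v(x,y,z)=-2$ and $nS_m(z)+(n+1)S_{m-1}(z)=0$, then $$z=(n^2+n)(x+y)^2+xy+2.$$ Hence the set of such points contains no point of the form $(2,2,z)$ with $z\notin\mathbb{R}$.
   Context: $S_k(q)$ are the Chebyshev polynomials defined for all integers $k$ by $S_0=1$, $S_1=q$, $S_{k+1}=qS_k-S_{k-1}$. Here $v(x,y,z)=\big(xS_m(z)-yS_{m-1}(z)\big)\big(yS_m(z)-xS_{m-1}(z)\big)-z\big(S_m^2(z)+S_{m-1}^2(z)\big)+4S_m(z)S_{m-1}(z)$. *)

(* Defs.v *)
From mathcomp Require Import all_boot all_order all_algebra.
From mathcomp Require Export complex.
From mathcomp Require Export Rstruct.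
Set Implicit Arguments. Unset Strict Implicit. Unset Printing Implicit Defensive.
Import Order.TTheory GRing.Theory Num.Theory.
Local Open Scope ring_scope.

Notation C := (Rdefinitions.R[i]).

(* Chebyshev polynomials S_k(q) for k : nat: S_0 = 1, S_1 = q,
   S_{k+2} = q S_{k+1} - S_k.  Only indices m, m-1 with m >= 1 are needed. *)
Fixpoint Sch {K : ringType} (k : nat) (q : K) : K :=
  match k with
  | 0 => 1
  | 1 => q
  | (k'.+1 as k1).+1 => q * Sch k1 q - Sch k' q
  end.

Definition vfun {K : comRingType} (m : nat) (x y z : K) : K :=
  (x * Sch m z - y * Sch m.-1 z) * (y * Sch m z - x * Sch m.-1 z)
  - z * (Sch m z ^+ 2 + Sch m.-1 z ^+ 2) + 4 * Sch m z * Sch m.-1 z.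

(* Main.v *)
Require Import Defs.
From mathcomp Require Import all_boot all_order all_algebra.
From mathcomp Require Import ring.
Import Order.TTheory GRing.Theory Num.Theory.
Local Open Scope ring_scope.

Lemma cassini {K : comRingType} (k : nat) (z : K) :
  Sch k.+1 z ^+ 2 - z * Sch k.+1 z * Sch k z + Sch k z ^+ 2 = 1.
Proof.
elim: k => [|k IH]; first by rewrite /=; ring.
have -> : Sch k.+2 z = z * Sch k.+1 z - Sch k z by [].
rewrite -IH; ring.
Qed.

Theorem lemma4p14 (m n : nat) : (1 <= m)%N -> (1 <= n)%N ->
  (forall x y z : C,
     vfun m x y z = -2 ->
     n%:R * Sch m z + (n.+1)%:R * Sch m.-1 z = 0 ->
     z = (n ^ 2 + n)%:R * (x + y) ^+ 2 + x * y + 2)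
  /\
  (forall z : C, z \notin Num.real ->
     ~ (vfun m 2 2 z = -2 /\ n%:R * Sch m z + (n.+1)%:R * Sch m.-1 z = 0)).
Proof.
move=> hm hn.
have key : forall x y z : C,
     vfun m x y z = -2 ->
     n%:R * Sch m z + (n.+1)%:R * Sch m.-1 z = 0 ->
     z = (n ^ 2 + n)%:R * (x + y) ^+ 2 + x * y + 2.
  move=> x y z hv hr.
  case: m hm hv hr => [//|k] _ hv hr /=.
  rewrite /vfun /= in hv hr.
  move: hv hr (cassini k z).
  set a := Sch k.+1 z; set b := Sch k z => hv hr hc.
  have hna : n%:R * a = - ((n.+1)%:R * b).
    by apply/eqP; rewrite -subr_eq0 opprK hr.
  have hF : (x*y - z + 2) * (a^+2 + b^+2) + (4 - x^+2 - y^+2 - 2*z) * a * b = 0.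
    have -> : (x*y - z + 2) * (a^+2 + b^+2) + (4 - x^+2 - y^+2 - 2*z) * a * b
      = ((x*a - y*b)*(y*a - x*b) - z*(a^+2+b^+2) + 4*a*b + 2)
        + 2 * ((a ^+ 2 - z * a * b + b ^+ 2) - 1) by ring.
    by rewrite hv hc; ring.
  have e1 : (n%:R ^+ 2) * ((x*y - z + 2) * (a^+2 + b^+2) + (4 - x^+2 - y^+2 - 2*z) * a * b)
     = - b^+2 * (z - (n ^ 2 + n)%:R * (x + y) ^+ 2 - x * y - 2).
    have -> : (n%:R ^+ 2) * ((x*y - z + 2) * (a^+2 + b^+2) + (4 - x^+2 - y^+2 - 2*z) * a * b)
       = (x*y - z + 2) * ((n%:R * a)^+2 + n%:R^+2 * b^+2) + (4 - x^+2 - y^+2 - 2*z) * n%:R * (n%:R * a) * b by ring.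
    rewrite hna natrD natrX; ring.
  have e2 : (n%:R ^+ 2) * (a ^+ 2 - z * a * b + b ^+ 2)
     = b^+2 * ((n.+1)%:R ^+ 2 + n%:R ^+ 2 + z * n%:R * (n.+1)%:R).
    have -> : (n%:R ^+ 2) * (a ^+ 2 - z * a * b + b ^+ 2)
       = (n%:R * a) ^+ 2 - z * (n%:R * a) * n%:R * b + n%:R ^+ 2 * b ^+ 2 by ring.
    rewrite hna; ring.
  rewrite hF mulr0 in e1; rewrite hc mulr1 in e2.
  have hb : b ^+ 2 != 0.
    apply/eqP => hb0; move: e2; rewrite hb0 mul0r => /eqP.
    rewrite expf_eq0 /= pnatr_eq0 => /eqP n0; by rewrite n0 in hn.
  apply/eqP; rewrite -subr_eq0; apply/eqP.
  have : - b^+2 * (z - (n ^ 2 + n)%:R * (x + y) ^+ 2 - x * y - 2) = 0 by rewrite -e1.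
  move/eqP; rewrite mulf_eq0 oppr_eq0 (negbTE hb) /= => /eqP <-; ring.
split=> // z hz [hv hr].
move: (key _ _ _ hv hr) => ez.
move: hz; rewrite ez.
have -> : ((n ^ 2 + n)%:R * (2 + 2) ^+ 2 + 2 * 2 + 2 : C) = ((n^2+n)*16 + 6)%N%:R.
  rewrite natrD natrM; ring.
by rewrite realn.
Qed.
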